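(* Let $f\in\mathcal S_\mu^1$ with $\mu\geqslant0$ and let $x^*$ be a global minimizer of $f$. Let $\gamma_0>0$, $x_0,v_0\in V$, and let $(\alpha_k)_{k\geqslant0}$ be arbitrary positive step sizes. Let sequences $(x_k,v_k,\gamma_k)$ satisfy, for all $k\geqslant0$, \[ \frac{x_{k+1}-x_k}{\alpha_k}=v_k-x_{k+1}-\beta_k\nabla f(x_{k+1}),\quad \frac{v_{k+1}-v_k}{\alpha_k}=\frac{\mu}{\gamma_k}(x_{k+1}-v_{k+1})-\frac1{\gamma_k}\nabla f(x_{k+1}),\quad \frac{\gamma_{k+1}-\gamma_k}{\alpha_k}=\mu-\gamma_{k+1}, \] where $\beta_k=\alpha_k/\gamma_k$. Define $\lambda_0=1$, $\lambda_k=\prod_{i=0}^{k-1}(1+\alpha_i)^{-1}$, $\mathcal L_k=f(x_k)-f(x^* )+\frac{\gamma_k}{2}\|v_k-x^*\|^2$, $\mathcal R_0=0$, $\mathcal R_k=\frac{\lambda_k}{2}\sum_{i=0}^{k-1}\frac{\alpha_i\beta_i}{\lambda_i}\|\nabla f(x_{i+1})\|^2$ for $k\geqslant1$, and $\mathcal E_k=\mathcal L_k+\mathcal R_k$. Then $\mathcal E_{k+1}\leqslant\mathcal E_k/(1+\alpha_k)$ for all $k\geqslant0$, and consequently, for all $k\geqslant0$, \[ \mathcal L_k+\frac{\lambda_k}{2}\sum_{i=0}^{k-1}\frac{\alpha_i^2}{\lambda_i\gamma_i}\|\nabla f(x_{i+1})\|^2\leqslant\lambda_k\mathcal L_0 .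 \]
   Context: $V$ is a real Hilbert space with inner product $(\cdot,\cdot)$ and norm $\|\cdot\|$; $V^*$ is identified with $V$. For $\mu\geqslant0$, $f$ is $\mu$-convex if $f(x)-f(y)-(p,x-y)\geqslant\frac{\mu}{2}\|x-y\|^2$ for all $x,y\in V$ and all $p\in\partial f(y)$ (subdifferential). $\mathcal S_\mu^1$ is the set of continuously differentiable $\mu$-convex functions on $V$. *)

(* Defs.v *)
From Stdlib Require Import Reals Lra.
Open Scope R_scope.

Record HilbertSpace := {
  carrier :> Type;
  vzero : carrier;
  vadd : carrier -> carrier -> carrier;
  vopp : carrier -> carrier;
  vscal : R -> carrier -> carrier;
  inner : carrier -> carrier -> R;
  vadd_assoc : forall x y z, vadd x (vadd y z) = vadd (vadd x y) z;
  vadd_comm : forall x y, vadd x y = vadd y x;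
  vadd_0 : forall x, vadd x vzero = x;
  vadd_opp : forall x, vadd x (vopp x) = vzero;
  vscal_1 : forall x, vscal 1 x = x;
  vscal_assoc : forall a b x, vscal a (vscal b x) = vscal (a * b) x;
  vscal_distr_v : forall a x y, vscal a (vadd x y) = vadd (vscal a x) (vscal a y);
  vscal_distr_s : forall a b x, vscal (a + b) x = vadd (vscal a x) (vscal b x);
  inner_sym : forall x y, inner x y = inner y x;
  inner_add_l : forall x y z, inner (vadd x y) z = inner x z + inner y z;
  inner_scal_l : forall a x y, inner (vscal a x) y = a * inner x y;
  inner_pos : forall x, 0 <= inner x x;
  inner_def : forall x, inner x x = 0 -> x = vzero;
  complete : forall u : nat -> carrier,
    (forall eps, 0 < eps -> exists N, forall m n, (N <= m)%nat -> (N <= n)%nat ->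
        sqrt (inner (vadd (u m) (vopp (u n))) (vadd (u m) (vopp (u n)))) < eps) ->
    exists l, forall eps, 0 < eps -> exists N, forall n, (N <= n)%nat ->
        sqrt (inner (vadd (u n) (vopp l)) (vadd (u n) (vopp l))) < eps
}.

Arguments vzero {h}.
Arguments vadd {h}.
Arguments vopp {h}.
Arguments vscal {h}.
Arguments inner {h}.

Definition vsub {V : HilbertSpace} (x y : V) : V := vadd x (vopp y).
Definition vnorm {V : HilbertSpace} (x : V) : R := sqrt (inner x x).

Definition has_gradient {V : HilbertSpace} (f : V -> R) (g x : V) : Prop :=
  forall eps, 0 < eps -> exists delta, 0 < delta /\
    forall h : V, vnorm h < delta ->
      Rabs (f (vadd x h) - f x - inner g h) <= eps * vnorm h.

(* (Frechet / regular) subdifferential of f at y; for convex f it is the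
   usual convex subdifferential, for differentiable f it is {grad f y}. *)
Definition subdiff {V : HilbertSpace} (f : V -> R) (y p : V) : Prop :=
  forall eps, 0 < eps -> exists delta, 0 < delta /\
    forall h : V, vnorm h < delta ->
      f (vadd y h) - f y - inner p h >= - eps * vnorm h.

Definition mu_convex {V : HilbertSpace} (mu : R) (f : V -> R) : Prop :=
  forall x y p : V, subdiff f y p ->
    f x - f y - inner p (vsub x y) >= mu / 2 * (vnorm (vsub x y))^2.

Definition in_S1 {V : HilbertSpace} (mu : R) (f : V -> R) (gradf : V -> V) : Prop :=
  (forall x, has_gradient f (gradf x) x) /\
  (forall x eps, 0 < eps -> exists delta, 0 < delta /\
     forall y, vnorm (vsub y x) < delta -> vnorm (vsub (gradf y) (gradf x)) < eps) /\
  mu_convex mu f.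

Fixpoint sumR (n : nat) (F : nat -> R) : R :=
  match n with O => 0 | S n' => sumR n' F + F n' end.

Fixpoint lambda (alpha : nat -> R) (k : nat) : R :=
  match k with O => 1 | S k' => lambda alpha k' / (1 + alpha k') end.

(* Main.v *)
Require Import Defs.
From Stdlib Require Import Reals Lra.
Open Scope R_scope.

Section Lin.
Context {V : HilbertSpace}.

Lemma inner_zero_l (c : V) : inner vzero c = 0.
Proof.
  pose proof (inner_add_l V vzero vzero c) as H.
  rewrite vadd_0 in H. lra.
Qed.

Lemma inner_opp_l (a c : V) : inner (vopp a) c = - inner a c.
Proof.
  pose proof (inner_add_l V a (vopp a) c) as H.
  rewrite vadd_opp, inner_zero_l in H. lra.
Qed.

Lemma inner_sub_l (a b c : V) : inner (vsub a b) c = inner a c - inner b c.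
Proof. unfold vsub. rewrite inner_add_l, inner_opp_l. ring. Qed.

Lemma inner_sub_r (a b c : V) : inner c (vsub a b) = inner c a - inner c b.
Proof. rewrite !(inner_sym V c). apply inner_sub_l. Qed.

Lemma inner_scal_l' (s : R) (a c : V) : inner (vscal s a) c = s * inner a c.
Proof. apply inner_scal_l. Qed.

Lemma inner_scal_r (s : R) (a c : V) : inner c (vscal s a) = s * inner c a.
Proof. rewrite !(inner_sym V c). apply inner_scal_l. Qed.

Lemma vnorm_sq (a : V) : vnorm a ^ 2 = inner a a.
Proof. unfold vnorm. apply pow2_sqrt, inner_pos. Qed.

Lemma grad_subdiff (f : V -> R) g y : has_gradient f g y -> subdiff f y g.
Proof.
  intros H eps Heps. destruct (H eps Heps) as [d [Hd Hh]].
  exists d; split; auto. intros h Hn. specialize (Hh h Hn).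
  pose proof (Rle_abs (- (f (vadd y h) - f y - inner g h))) as A.
  rewrite Rabs_Ropp in A. lra.
Qed.
End Lin.

Ltac expand := repeat (rewrite ?inner_sub_l, ?inner_sub_r, ?inner_scal_l', ?inner_scal_r in * ).

Lemma step (V : HilbertSpace) (mu : R) (f : V -> R) (xs : V) (a g g' : R)
  (x x' v v' G : V) :
  0 <= mu -> mu_convex mu f -> subdiff f x' G -> 0 < g -> 0 < a ->
  vscal (/ a) (vsub x' x) = vsub (vsub v x') (vscal (a / g) G) ->
  vscal (/ a) (vsub v' v) = vsub (vscal (mu / g) (vsub x' v')) (vscal (/ g) G) ->
  (g' - g) / a = mu - g' ->
  (1 + a) * (f x' - f xs + g' / 2 * vnorm (vsub v' xs) ^ 2) + a * (a / g) / 2 * vnorm G ^ 2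
  <= f x - f xs + g / 2 * vnorm (vsub v xs) ^ 2.
Proof.
  intros Hmu Hconv Hsub Hg Ha E1 E2 E3.
  assert (Gg : (1 + a) * g' = g + a * mu).
  { assert (g' - g = a * (mu - g')) by (rewrite <- E3; field; lra). lra. }
  assert (R1 : forall z, inner x' z - inner x z = a * (inner v z - inner x' z) - a * (a / g) * inner G z).
  { intro z. pose proof (f_equal (fun u => inner u z) E1) as H. simpl in H. expand.
    replace (inner x' z - inner x z) with (a * (/ a * (inner x' z - inner x z))) by (field; lra).
    rewrite H. ring. }
  assert (R2 : forall z, g * (inner v' z - inner v z) = a * mu * (inner x' z - inner v' z) - a * inner G z).
  { intro z. pose proof (f_equal (fun u => inner u z) E2) as H. simpl in H. expand.
    replace (g * (inner v' z - inner v z)) with (a * g * (/ a * (inner v' z - inner v z))) by (field; lra).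
    rewrite H. field. lra. }
  pose proof (Hconv x x' G Hsub) as C1.
  pose proof (Hconv xs x' G Hsub) as C2.
  assert (C1' : f x - f x' - inner G (vsub x x') >= 0).
  { assert (0 <= mu / 2 * vnorm (vsub x x') ^ 2).
    { apply Rmult_le_pos. lra. apply pow2_ge_0. } lra. }
  assert (C2' : a * (f xs - f x' - inner G (vsub xs x')) >= a * (mu / 2 * vnorm (vsub xs x') ^ 2)).
  { apply Rmult_ge_compat_l; lra. }
  assert (M : 0 <= a * mu * inner (vsub x' v') (vsub x' v')).
  { apply Rmult_le_pos. apply Rmult_le_pos; lra. apply inner_pos. }
  assert (S : a * inner G (vsub v v') <= g / 2 * inner (vsub v v') (vsub v v') + a * (a / g) / 2 * inner G G).
  { pose proof (inner_pos V (vsub (vsub v v') (vscal (a / g) G))) as P.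
    expand.
    assert (0 <= g / 2 * (inner v v - inner v v' - (inner v' v - inner v' v') -
     a / g * (inner G v - inner G v') -
     (a / g * (inner v G - inner v' G) - a / g * (a / g * inner G G)))).
    { apply Rmult_le_pos; lra. }
    rewrite (inner_sym V G v), (inner_sym V G v') in H.
    expand.
    replace (g / 2 *
     (inner v v - inner v v' - (inner v' v - inner v' v') - a / g * (inner v G - inner v' G) -
      (a / g * (inner v G - inner v' G) - a / g * (a / g * inner G G))))
     with (g / 2 * (inner v v - inner v v' - (inner v' v - inner v' v')) - a * (inner v G - inner v' G)
           + a * (a / g) / 2 * inner G G) in H by (field; lra).
    rewrite (inner_sym V G v), (inner_sym V G v'). lra. }
  assert (GQ : (1 + a) * g' * inner (vsub v' xs) (vsub v' xs) = (g + a * mu) * inner (vsub v' xs) (vsub v' xs)).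
  { rewrite Gg. ring. }
  pose proof (R1 G) as R1G. pose proof (R2 v') as R2a. pose proof (R2 xs) as R2b.
  rewrite !vnorm_sq in *.
  expand.
  pose proof (inner_sym V x x') as s1. pose proof (inner_sym V x v) as s2.
  pose proof (inner_sym V x v') as s3. pose proof (inner_sym V x xs) as s4.
  pose proof (inner_sym V x G) as s5. pose proof (inner_sym V x' v) as s6.
  pose proof (inner_sym V x' v') as s7. pose proof (inner_sym V x' xs) as s8.
  pose proof (inner_sym V x' G) as s9. pose proof (inner_sym V v v') as s10.
  pose proof (inner_sym V v xs) as s11. pose proof (inner_sym V v G) as s12.
  pose proof (inner_sym V v' xs) as s13. pose proof (inner_sym V v' G) as s14.
  pose proof (inner_sym V xs G) as s15.
  clear C1 C2 R1 R2 E1 E2 E3 Hconv Hsub.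
  revert C1' C2' M S GQ R1G R2a R2b.
  rewrite ?s1, ?s2, ?s3, ?s4, ?s5, ?s6, ?s7, ?s8, ?s9, ?s10, ?s11, ?s12, ?s13, ?s14, ?s15.
  intros. lra.
Qed.

Lemma sumR_ext n (F G : nat -> R) : (forall i, F i = G i) -> sumR n F = sumR n G.
Proof. intros H; induction n; simpl; auto. rewrite IHn, H. reflexivity. Qed.

Lemma lambda_S a k : lambda a (S k) = lambda a k / (1 + a k).
Proof. reflexivity. Qed.
Lemma sumR_S k F : sumR (S k) F = sumR k F + F k.
Proof. reflexivity. Qed.

Theorem theorem3p1 (V : HilbertSpace) (mu : R) (f : V -> R) (gradf : V -> V)
  (xstar : V) (alpha gamma : nat -> R) (x v : nat -> V) :
  0 <= mu ->
  in_S1 mu f gradf ->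
  (forall y : V, f xstar <= f y) ->
  0 < gamma 0%nat ->
  (forall k, 0 < alpha k) ->
  (forall k,
     vscal (/ alpha k) (vsub (x (S k)) (x k)) =
       vsub (vsub (v k) (x (S k))) (vscal (alpha k / gamma k) (gradf (x (S k))))) ->
  (forall k,
     vscal (/ alpha k) (vsub (v (S k)) (v k)) =
       vsub (vscal (mu / gamma k) (vsub (x (S k)) (v (S k))))
            (vscal (/ gamma k) (gradf (x (S k))))) ->
  (forall k, (gamma (S k) - gamma k) / alpha k = mu - gamma (S k)) ->
  let beta := fun k => alpha k / gamma k in
  let L := fun k => f (x k) - f xstar + gamma k / 2 * (vnorm (vsub (v k) xstar))^2 in
  let Rk := fun k => lambda alpha k / 2 *
       sumR k (fun i => alpha i * beta i / lambda alpha i * (vnorm (gradf (x (S i))))^2) in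
  let E := fun k => L k + Rk k in
  (forall k, E (S k) <= E k / (1 + alpha k)) /\
  (forall k, L k + lambda alpha k / 2 *
       sumR k (fun i => alpha i ^ 2 / (lambda alpha i * gamma i) * (vnorm (gradf (x (S i))))^2)
     <= lambda alpha k * L 0%nat).
Proof.
  intros Hmu [Hgrad [_ Hconv]] Hmin Hg0 Ha E1 E2 E3 beta L Rk E.
  assert (Hg : forall k, 0 < gamma k).
  { induction k; auto.
    assert (gamma (S k) - gamma k = alpha k * (mu - gamma (S k))).
    { rewrite <- E3. field. specialize (Ha k). lra. }
    assert ((1 + alpha k) * gamma (S k) = gamma k + alpha k * mu) by lra.
    assert (0 < (1 + alpha k) * gamma (S k)).
    { rewrite H0. pose proof (Ha k). nra. }
    pose proof (Ha k). nra. }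
  assert (Hl : forall k, 0 < lambda alpha k).
  { induction k; simpl. lra. apply Rdiv_lt_0_compat; auto. pose proof (Ha k); lra. }
  assert (P1 : forall k, E (S k) <= E k / (1 + alpha k)).
  { intro k. pose proof (Ha k) as Hak. pose proof (Hg k). pose proof (Hl k).
    pose proof (step V mu f xstar (alpha k) (gamma k) (gamma (S k)) (x k) (x (S k)) (v k) (v (S k))
      (gradf (x (S k))) Hmu Hconv (grad_subdiff _ _ _ (Hgrad _)) ltac:(auto) Hak (E1 k) (E2 k) (E3 k)) as St.
    unfold E, Rk, L. rewrite lambda_S, sumR_S. cbv beta. unfold beta in *.
    set (Q := sumR k _). set (N := vnorm (gradf (x (S k))) ^ 2) in *.
    apply (Rmult_le_reg_l (1 + alpha k)). lra.
    assert (Hc: forall z, (1+alpha k) * (z/(1+alpha k)) = z) by (intro; field; lra). rewrite Hc.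
    replace ((1 + alpha k) *
     (f (x (S k)) - f xstar + gamma (S k) / 2 * vnorm (vsub (v (S k)) xstar) ^ 2 +
      lambda alpha k / (1 + alpha k) / 2 *
      (Q + alpha k * (alpha k / gamma k) / lambda alpha k * N)))
    with ((1 + alpha k) * (f (x (S k)) - f xstar + gamma (S k) / 2 * vnorm (vsub (v (S k)) xstar) ^ 2)
          + alpha k * (alpha k / gamma k) / 2 * N + lambda alpha k / 2 * Q) by (field; lra).
    lra. }
  split; auto.
  assert (P2 : forall k, E k <= lambda alpha k * L 0%nat).
  { induction k.
    - unfold E, Rk. simpl. lra.
    - eapply Rle_trans. apply P1. rewrite lambda_S.
      pose proof (Ha k).
      unfold Rdiv. rewrite Rmult_assoc, (Rmult_comm (/ _)), <- Rmult_assoc.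
      apply Rmult_le_compat_r. left. apply Rinv_0_lt_compat. lra. auto. }
  intro k. eapply Rle_trans; [| apply P2]. unfold E, Rk. right. f_equal. f_equal.
  apply sumR_ext. intro i. unfold beta. pose proof (Hg i). pose proof (Hl i). field. lra.
Qed.
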